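(* For every process $Q$ there exist $k\ge 0$, processes $P_1,\ldots,P_k$, prefixes $\alpha_1,\ldots,\alpha_k$, a sequence of names $\vec c$, and sequences of names $\vec a_1,\ldots,\vec a_k$ (where $\vec c$ and each $\vec a_i$ may be empty) such that $$Q \equiv (\nu \vec c)\big((\vec a_1)\alpha_1.P_1 \mid (\vec a_2)\alpha_2.P_2 \mid \cdots \mid (\vec a_k)\alpha_k.P_k\big).$$
   Context: Let $\mathcal N$ be a countable set of names, ranged over by $a,b,c,x,y,z$. Processes are generated by $P,Q ::= 0 \mid P\mid Q \mid (\nu a)P \mid (a)P \mid \alpha.P$, where $(\nu a)P$ is name restriction (binding $a$), $(a)P$ is the authorization scope (meaning $P$ is authorized to act on channel $a$; here $a$ is not bound), and prefixes are $\alpha ::= \overline{a}\langle b\rangle$ (output of $b$ on $a$) $\mid a(x)$ (input on $a$, binding $x$ in the continuation) $\mid \overline{a}\langle\!\langle b\rangle\!\rangle$ (send the authorization for $b$ on $a$) $\mid a\langle\!\langle b\rangle\!\rangle$ (receive the authorization for $b$ on $a$; $b$ is not bound). $(\nu\vec c)P$ abbreviates $(\nu c_1)\cdots(\nu c_m)P$ and $(\vec a)P$ abbreviates $(a_1)\cdots(a_m)P$. Free names: $\mathrm{fn}(0)=\emptyset$, $\mathrm{fn}(P\mid Q)=\mathrm{fn}(P)\cup\mathrm{fn}(Q)$, $\mathrm{fn}((\nu a)P)=\mathrm{fn}(P)\setminus\{a\}$, $\mathrm{fn}((a)P)=\{a\}\cup\mathrm{fn}(P)$, $\mathrm{fn}(\overline{a}\langle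 b\rangle.P)=\mathrm{fn}(\overline{a}\langle\!\langle b\rangle\!\rangle.P)=\mathrm{fn}(a\langle\!\langle b\rangle\!\rangle.P)=\{a,b\}\cup\mathrm{fn}(P)$, $\mathrm{fn}(a(x).P)=\{a\}\cup(\mathrm{fn}(P)\setminus\{x\})$. Structural congruence $\equiv$ is the least congruence on processes satisfying: $P\mid 0\equiv P$; $P\mid Q\equiv Q\mid P$; $(P\mid Q)\mid R\equiv P\mid(Q\mid R)$; $(\nu a)0\equiv 0$; $(\nu a)(\nu b)P\equiv(\nu b)(\nu a)P$; $P\mid(\nu a)Q\equiv(\nu a)(P\mid Q)$ if $a\notin\mathrm{fn}(P)$; $P\equiv Q$ whenever $P$ and $Q$ are $\alpha$-convertible (renaming of bound names); $(a)(b)P\equiv(b)(a)P$; $(a)0\equiv 0$; $(a)(P\mid Q)\equiv(a)P\mid(a)Q$; $(a)(\nu b)P\equiv(\nu b)(a)P$ if $a\neq b$. An empty parallel composition ($k=0$) is read as $0$. *)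

(* Defs.v *)
From Stdlib Require Import List Arith.
Import ListNotations.

Definition name := nat.

Inductive prefix : Type :=
| POut  (a b : name)   (* a<b>        : output of b on a *)
| PIn   (a x : name)   (* a(x)        : input on a, binds x *)
| PAOut (a b : name)   (* a<<b>> bar  : send authorization for b on a *)
| PAIn  (a b : name).  (* a<<b>>      : receive authorization for b on a *)

Inductive proc : Type :=
| Nil  : proc
| Par  : proc -> proc -> proc
| Res  : name -> proc -> proc
| Auth : name -> proc -> proc      (* (a)P, does not bind a *)
| Pre  : prefix -> proc -> proc.

Fixpoint fn (P : proc) (n : name) : Prop :=
  match P with
  | Nil => False
  | Par P1 P2 => fn P1 n \/ fn P2 n
  | Res a P1 => fn P1 n /\ n <> a
  | Auth a P1 => n = a \/ fn P1 n
  | Pre (POut a b) P1 | Pre (PAOut a b) P1 | Pre (PAIn a b) P1 =>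
      n = a \/ n = b \/ fn P1 n
  | Pre (PIn a x) P1 => n = a \/ (fn P1 n /\ n <> x)
  end.

Definition swapn (a b n : name) : name :=
  if Nat.eqb n a then b else if Nat.eqb n b then a else n.

Definition swap_pre (a b : name) (p : prefix) : prefix :=
  match p with
  | POut c d => POut (swapn a b c) (swapn a b d)
  | PIn c x => PIn (swapn a b c) (swapn a b x)
  | PAOut c d => PAOut (swapn a b c) (swapn a b d)
  | PAIn c d => PAIn (swapn a b c) (swapn a b d)
  end.

Fixpoint swap (a b : name) (P : proc) : proc :=
  match P with
  | Nil => Nil
  | Par P1 P2 => Par (swap a b P1) (swap a b P2)
  | Res c P1 => Res (swapn a b c) (swap a b P1)
  | Auth c P1 => Auth (swapn a b c) (swap a b P1)
  | Pre p P1 => Pre (swap_pre a b p) (swap a b P1)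
  end.

(* Structural congruence: least congruence containing the listed axioms.
   Alpha-conversion is generated (under congruence closure) by renaming
   a single binder to a fresh name via swapping. *)
Inductive scong : proc -> proc -> Prop :=
| sc_refl P : scong P P
| sc_sym P Q : scong P Q -> scong Q P
| sc_trans P Q R : scong P Q -> scong Q R -> scong P R
| sc_par_l P P' Q : scong P P' -> scong (Par P Q) (Par P' Q)
| sc_par_r P Q Q' : scong Q Q' -> scong (Par P Q) (Par P Q')
| sc_res a P P' : scong P P' -> scong (Res a P) (Res a P')
| sc_auth a P P' : scong P P' -> scong (Auth a P) (Auth a P')
| sc_pre p P P' : scong P P' -> scong (Pre p P) (Pre p P')
| sc_par_nil P : scong (Par P Nil) P
| sc_par_comm P Q : scong (Par P Q) (Par Q P)
| sc_par_assoc P Q R : scong (Par (Par P Q) R) (Par P (Par Q R))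
| sc_res_nil a : scong (Res a Nil) Nil
| sc_res_comm a b P : scong (Res a (Res b P)) (Res b (Res a P))
| sc_scope_ext a P Q : ~ fn P a -> scong (Par P (Res a Q)) (Res a (Par P Q))
| sc_alpha_res a b P : ~ fn P b -> scong (Res a P) (Res b (swap a b P))
| sc_alpha_in c x y P : ~ fn P y ->
    scong (Pre (PIn c x) P) (Pre (PIn c y) (swap x y P))
| sc_auth_comm a b P : scong (Auth a (Auth b P)) (Auth b (Auth a P))
| sc_auth_nil a : scong (Auth a Nil) Nil
| sc_auth_par a P Q : scong (Auth a (Par P Q)) (Par (Auth a P) (Auth a Q))
| sc_auth_res a b P : a <> b -> scong (Auth a (Res b P)) (Res b (Auth a P)).

Definition res_list (cs : list name) (P : proc) : proc := fold_right Res P cs.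
Definition auth_list (as_ : list name) (P : proc) : proc := fold_right Auth P as_.

Fixpoint par_list (l : list proc) : proc :=
  match l with
  | [] => Nil
  | [P] => P
  | P :: l' => Par P (par_list l')
  end.

(* Main.v *)
Require Import Defs.
From Stdlib Require Import List Arith Lia.
Import ListNotations.

Definition F (t : list name * prefix * proc) : proc :=
  match t with (as_, al, P) => auth_list as_ (Pre al P) end.

Definition NFt cs l := res_list cs (par_list (map F l)).

Definition pnames (p : prefix) : list name :=
  match p with
  | POut a b | PIn a b | PAOut a b | PAIn a b => [a; b]
  end.

Fixpoint names (P : proc) : list name :=
  match P with
  | Nil => []
  | Par P1 P2 => names P1 ++ names P2
  | Res a P1 => a :: names P1
  | Auth a P1 => a :: names P1
  | Pre p P1 => pnames p ++ names P1
  end.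

Lemma fn_names P n : fn P n -> In n (names P).
Proof.
  induction P; simpl; intros H.
  - tauto.
  - apply in_or_app; tauto.
  - right; tauto.
  - destruct H; [left; auto | right; auto].
  - destruct p; simpl in *; intuition.
Qed.

Lemma names_res cs X d : In d cs -> In d (names (res_list cs X)).
Proof. induction cs; simpl; intuition. Qed.

Definition fresh (l : list name) := S (fold_right max 0 l).
Lemma fresh_gt l n : In n l -> n < fresh l.
Proof.
  unfold fresh; induction l; simpl; intros H; [tauto|].
  destruct H; subst; [lia|]. specialize (IHl H). lia.
Qed.
Lemma fresh_notin l : ~ In (fresh l) l.
Proof. intros H. apply fresh_gt in H. lia. Qed.

Lemma swapn_inv a b n : swapn a b (swapn a b n) = n.
Proof.
  unfold swapn.
  destruct (Nat.eqb_spec n a); destruct (Nat.eqb_spec n b);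
  repeat match goal with |- context [Nat.eqb ?x ?y] => destruct (Nat.eqb_spec x y) end;
  subst; lia.
Qed.

Lemma sw_eq a b n c : n = swapn a b c <-> swapn a b n = c.
Proof.
  split; intros H; subst; rewrite ?swapn_inv; auto.
Qed.

Lemma fn_swap a b P n : fn (swap a b P) n <-> fn P (swapn a b n).
Proof.
  revert n; induction P as [| P1 IHP1 P2 IHP2 | c P IHP | c P IHP | p P IHP]; intros n; simpl.
  - tauto.
  - rewrite IHP1, IHP2; tauto.
  - rewrite IHP, sw_eq; tauto.
  - rewrite IHP, sw_eq; tauto.
  - destruct p; simpl; rewrite IHP, ?(sw_eq a b n); tauto.
Qed.

Definition swc a b (t : list name * prefix * proc) :=
  match t with (as_, al, P) => (map (swapn a b) as_, swap_pre a b al, swap a b P) end.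

Lemma swap_res a b cs X : swap a b (res_list cs X) = res_list (map (swapn a b) cs) (swap a b X).
Proof. induction cs; simpl; congruence. Qed.
Lemma swap_auth a b cs X : swap a b (auth_list cs X) = auth_list (map (swapn a b) cs) (swap a b X).
Proof. induction cs; simpl; congruence. Qed.
Lemma swap_par a b l : swap a b (par_list l) = par_list (map (swap a b) l).
Proof.
  induction l as [|x l IH]; simpl; auto.
  destruct l; simpl in *; auto. rewrite IH; auto.
Qed.

Lemma swap_NF a b cs l : swap a b (NFt cs l) = NFt (map (swapn a b) cs) (map (swc a b) l).
Proof.
  unfold NFt. rewrite swap_res, swap_par, !map_map. f_equal. f_equal.
  apply map_ext. intros [[as_ al] P]. simpl. rewrite swap_auth. reflexivity.
Qed.

Lemma fn_alpha c c' R n : ~ fn R c' ->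
  (fn (Res c' (swap c c' R)) n <-> fn (Res c R) n).
Proof.
  intros Hc. simpl. rewrite fn_swap. unfold swapn.
  destruct (Nat.eqb_spec n c); destruct (Nat.eqb_spec n c'); subst; intuition.
Qed.

Lemma rename : forall cs l A, exists cs' l',
  scong (NFt cs l) (NFt cs' l') /\ (forall n, fn (NFt cs' l') n <-> fn (NFt cs l) n)
  /\ (forall c, In c cs' -> ~ In c A).
Proof.
  induction cs as [|c cs IH]; intros l A.
  - exists [], l. split; [apply sc_refl|]. split; [tauto|]. simpl; tauto.
  - destruct (IH l A) as (cs0 & l0 & Hs & Hf & Hd).
    set (R := NFt cs0 l0).
    set (c' := fresh (names R ++ A)).
    assert (Hc' : ~ In c' (names R ++ A)) by apply fresh_notin.
    assert (HcR : ~ fn R c') by (intros H; apply Hc', in_or_app; left; apply fn_names; auto).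
    exists (c' :: map (swapn c c') cs0), (map (swc c c') l0).
    change (NFt (c' :: map (swapn c c') cs0) (map (swc c c') l0))
      with (Res c' (NFt (map (swapn c c') cs0) (map (swc c c') l0))).
    rewrite <- swap_NF. fold R.
    change (NFt (c :: cs) l) with (Res c (NFt cs l)).
    split; [|split].
    + eapply sc_trans. apply sc_res. exact Hs. apply sc_alpha_res. exact HcR.
    + intros n. rewrite fn_alpha by exact HcR. change (fn R n /\ n <> c <-> fn (NFt cs l) n /\ n <> c). unfold R. rewrite Hf. tauto.
    + intros d [Hd'|Hd'].
      * subst d. intros H; apply Hc', in_or_app; right; auto.
      * apply in_map_iff in Hd' as (e & He & Hin).
        assert (HeR : In e (names R)) by (apply names_res; auto).
        unfold swapn in He.
        destruct (Nat.eqb_spec e c).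
        -- subst. intros H; apply Hc', in_or_app; right; auto.
        -- destruct (Nat.eqb_spec e c').
           ++ subst. exfalso; apply Hc', in_or_app; left; auto.
           ++ subst. apply Hd; auto.
Qed.

Lemma res_cong cs P P' : scong P P' -> scong (res_list cs P) (res_list cs P').
Proof. induction cs; simpl; intros; auto using sc_res. Qed.

Lemma ext2 cs P Q : (forall c, In c cs -> ~ fn P c) ->
  scong (Par P (res_list cs Q)) (res_list cs (Par P Q)).
Proof.
  induction cs as [|c cs IH]; simpl; intros H.
  - apply sc_refl.
  - eapply sc_trans. apply sc_scope_ext. apply H; auto.
    apply sc_res. apply IH. intros; apply H; auto.
Qed.

Lemma ext1 cs P Q : (forall c, In c cs -> ~ fn Q c) ->
  scong (Par (res_list cs P) Q) (res_list cs (Par P Q)).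
Proof.
  intros H. eapply sc_trans. apply sc_par_comm.
  eapply sc_trans. apply ext2. exact H.
  apply res_cong. apply sc_par_comm.
Qed.

Lemma par_list_cons x l : scong (par_list (x :: l)) (Par x (par_list l)).
Proof. destruct l; simpl. apply sc_sym, sc_par_nil. apply sc_refl. Qed.

Lemma par_list_app l1 l2 : scong (Par (par_list l1) (par_list l2)) (par_list (l1 ++ l2)).
Proof.
  induction l1 as [|x l1 IH]; simpl.
  - eapply sc_trans. apply sc_par_comm. apply sc_par_nil.
  - eapply sc_trans. apply sc_par_l. apply par_list_cons.
    eapply sc_trans. apply sc_par_assoc.
    eapply sc_trans. apply sc_par_r. exact IH.
    apply sc_sym. apply par_list_cons.
Qed.

Lemma auth_par a l : scong (Auth a (par_list l)) (par_list (map (Auth a) l)).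
Proof.
  induction l as [|x l IH].
  - apply sc_auth_nil.
  - eapply sc_trans. apply sc_auth. apply par_list_cons.
    eapply sc_trans. apply sc_auth_par.
    eapply sc_trans. apply sc_par_r. exact IH.
    apply sc_sym. apply (par_list_cons (Auth a x) (map (Auth a) l)).
Qed.

Lemma auth_res a cs P : ~ In a cs -> scong (Auth a (res_list cs P)) (res_list cs (Auth a P)).
Proof.
  induction cs as [|c cs IH]; simpl; intros H.
  - apply sc_refl.
  - eapply sc_trans. apply sc_auth_res. intros E; apply H; auto.
    apply sc_res. apply IH. tauto.
Qed.

Lemma res_list_app a b P : res_list (a ++ b) P = res_list a (res_list b P).
Proof. unfold res_list. apply fold_right_app. Qed.

Lemma main Q : exists cs l, scong Q (NFt cs l).
Proof.
  induction Q.
  - exists [], []. apply sc_refl.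
  - destruct IHQ1 as (cs1 & l1 & H1). destruct IHQ2 as (cs2 & l2 & H2).
    destruct (rename cs1 l1 (names (NFt cs2 l2))) as (cs1' & l1' & Hs1 & Hf1 & Hd1).
    destruct (rename cs2 l2 (names (par_list (map F l1')))) as (cs2' & l2' & Hs2 & Hf2 & Hd2).
    exists (cs1' ++ cs2'), (l1' ++ l2').
    eapply sc_trans. apply sc_par_l. eapply sc_trans. exact H1. exact Hs1.
    eapply sc_trans. apply sc_par_r. eapply sc_trans. exact H2. exact Hs2.
    unfold NFt at 1 2.
    eapply sc_trans. apply ext1.
    { intros c Hc Hf. rewrite Hf2 in Hf. apply (Hd1 c Hc). apply fn_names. exact Hf. }
    eapply sc_trans. apply res_cong. apply ext2.
    { intros c Hc Hf. apply (Hd2 c Hc). apply fn_names. exact Hf. }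
    unfold NFt. rewrite res_list_app. apply res_cong. apply res_cong. rewrite map_app. apply par_list_app.
  - destruct IHQ as (cs & l & H). exists (n :: cs), l. simpl. apply sc_res. exact H.
  - destruct IHQ as (cs & l & H).
    destruct (rename cs l [n]) as (cs' & l' & Hs & _ & Hd).
    exists cs', (map (fun t => match t with (as_, al, P) => (n :: as_, al, P) end) l').
    eapply sc_trans. apply sc_auth. eapply sc_trans. exact H. exact Hs.
    unfold NFt. eapply sc_trans. apply auth_res.
    { intros Hin. apply (Hd n Hin). simpl; auto. }
    apply res_cong. eapply sc_trans. apply auth_par.
    rewrite !map_map. replace (map (fun x => Auth n (F x)) l') with
      (map (fun x => F (let '(as_, al, P) := x in (n :: as_, al, P))) l'). apply sc_refl.
    apply map_ext. intros [[as_ al] P]. reflexivity.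
  - exists [], [([], p, Q)]. apply sc_refl.
Qed.

Theorem mainTheorem1 :
  forall Q : proc,
  exists (cs : list name) (comps : list (list name * prefix * proc)),
    scong Q
      (res_list cs
        (par_list (map (fun t => match t with
                                 | (as_, al, P) => auth_list as_ (Pre al P)
                                 end) comps))).
Proof. intros Q. exact (main Q). Qed.
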